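(* Let $(\mathcal{A}_G[[\lambda]],\star_G)$ be a right universal deformation of a group $G$ and let $\tau:G\times X\to X$ be a left action of $G$ on a set $X$. Define $\mathcal{A}_X$ and $\star_X$ by $(f_1\star_Xf_2)(x)=(\alpha^xf_1\star_G\alpha^xf_2)(e)$. Then: (1) $(\mathcal{A}_X[[\lambda]],\star_X)$ is an associative formal deformation of $\mathcal{A}_X$, which is Hermitian if $\star_G$ is Hermitian, and for every $x\in X$ the map $\alpha^x:(\mathcal{A}_X[[\lambda]],\star_X)\to(\mathcal{A}_G[[\lambda]],\star_G)$ is an algebra homomorphism, i.e. $\alpha^x(f_1\star_Xf_2)=\alpha^xf_1\star_G\alpha^xf_2$. (2) If $f_1\in\mathcal{A}_X[[\lambda]]$ has all coefficients constant on an orbit $G.x_0$, then $(f_1\star_Xf_2)(g.x_0)=f_1(g.x_0)f_2(g.x_0)=(f_2\star_Xf_1)(g.x_0)$ for all $f_2\in\mathcal{A}_X[[\lambda]]$ and $g\in G$; in particular, if $f_1$ is constant along every orbit, then $f_1\star_Xf_2=f_1f_2=f_2\star_Xf_1$.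
   Context: $G$ is a group with unit $e$, right translations $R_g(h)=hg$ and left translations $L_g(h)=gh$. $\mathcal A_G$ is a subalgebra of the algebra $\mathrm{Fun}(G)$ of complex-valued functions on $G$, containing $1$, closed under complex conjugation, with $R_g^*\mathcal A_G\subseteq\mathcal A_G$ for all $g$. A right universal deformation is an associative $\mathbb C[[\lambda]]$-bilinear product $\star_G$ on $\mathcal A_G[[\lambda]]$ whose zeroth order is the pointwise product, with $1\star_Gf=f=f\star_G1$, and such that $R_g^*(f_1\star_Gf_2)=R_g^*f_1\star_GR_g^*f_2$ for all $g\in G$. It is Hermitian if $\overline{f_1\star_Gf_2}=\overline{f_2}\star_G\overline{f_1}$ ($\lambda$ real). For the action write $g.x=\tau(g,x)$, $\tau_g=\tau(g,\cdot)$, and define $\alpha^x:\mathrm{Fun}(X)\to\mathrm{Fun}(G)$ by $(\alpha^xf)(g)=f(g.x)=(\tau_g^*f)(x)$, extended $\mathbb C[[\lambda]]$-linearly. $\mathcal A_X=\{f\in\mathrm{Fun}(X):\alpha^xf\in\mathcal A_G\text{ for all }x\in X\}$. *)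

(* Defs.v *)
From HB Require Import structures.
From mathcomp Require Import all_boot all_order all_algebra.
From mathcomp Require Import reals complex.
Set Implicit Arguments. Unset Strict Implicit. Unset Printing Implicit Defensive.
Import GRing.Theory Num.Theory.
Local Open Scope ring_scope.
Local Open Scope complex_scope.

(* Complex numbers are modelled as R[i] for a real field R : realType.
   Fun(T)[[lambda]] is modelled as  nat -> T -> R[i]  : the n-th coefficient
   of f is the function  f n : T -> C.                                     *)

Section Series.
Variable R : realType.
Local Notation C := (R[i]).

Definition ser (T : Type) := nat -> T -> C.

Variable T : Type.

Definition ser_add (f1 f2 : ser T) : ser T := fun n t => f1 n t + f2 n t.

(* multiplication by a scalar a in C[[lambda]] (Cauchy product) *)
Definition ser_scale (a : nat -> C) (f : ser T) : ser T :=
  fun n t => \sum_(i < n.+1) a i * f (n - i)%N t.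

Definition ser_mul (f1 f2 : ser T) : ser T :=
  fun n t => \sum_(i < n.+1) f1 i t * f2 (n - i)%N t.

Definition ser_one : ser T := fun n _ => if n == 0%N then 1 else 0.

(* coefficientwise complex conjugation (lambda real) *)
Definition ser_conj (f : ser T) : ser T := fun n t => (f n t)^*.

Definition in_ser (A : (T -> C) -> Prop) (f : ser T) : Prop := forall n, A (f n).

Definition is_formal_deformation (A : (T -> C) -> Prop)
    (star : ser T -> ser T -> ser T) : Prop :=
  [/\ (forall f1 f2, in_ser A f1 -> in_ser A f2 -> in_ser A (star f1 f2)),
      ((forall f1 f1' f2, in_ser A f1 -> in_ser A f1' -> in_ser A f2 ->
          star (ser_add f1 f1') f2 = ser_add (star f1 f2) (star f1' f2)) /\
      (forall f1 f2 f2', in_ser A f1 -> in_ser A f2 -> in_ser A f2' ->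
          star f1 (ser_add f2 f2') = ser_add (star f1 f2) (star f1 f2')) /\
      (forall (a : nat -> C) f1 f2, in_ser A f1 -> in_ser A f2 ->
          star (ser_scale a f1) f2 = ser_scale a (star f1 f2)) /\
      (forall (a : nat -> C) f1 f2, in_ser A f1 -> in_ser A f2 ->
          star f1 (ser_scale a f2) = ser_scale a (star f1 f2))),
      (forall f1 f2 f3, in_ser A f1 -> in_ser A f2 -> in_ser A f3 ->
          star (star f1 f2) f3 = star f1 (star f2 f3)),
      (forall f1 f2, in_ser A f1 -> in_ser A f2 ->
          star f1 f2 0%N = (fun t => f1 0%N t * f2 0%N t)) &
      (forall f, in_ser A f -> star ser_one f = f /\ star f ser_one = f)].

Definition is_hermitian (A : (T -> C) -> Prop)
    (star : ser T -> ser T -> ser T) : Prop :=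
  forall f1 f2, in_ser A f1 -> in_ser A f2 ->
    ser_conj (star f1 f2) = star (ser_conj f2) (ser_conj f1).

End Series.

Section Group.
Variable R : realType.
Local Notation C := (R[i]).
Variable G : groupType.

Definition rtrans (g : G) (u : G -> C) : G -> C := fun h => u (h * g)%g.
Definition ser_rtrans (g : G) (f : ser R G) : ser R G := fun n => rtrans g (f n).

Definition admissible_algebra (AG : (G -> C) -> Prop) : Prop :=
  [/\ AG (fun _ => 1),
      (forall u v, AG u -> AG v -> AG (fun g => u g + v g)) /\
      (forall (c : C) u, AG u -> AG (fun g => c * u g)),
      (forall u v, AG u -> AG v -> AG (fun g => u g * v g)),
      (forall u, AG u -> AG (fun g => (u g)^*)) &
      (forall g u, AG u -> AG (rtrans g u))].

Definition is_right_universal_deformation (AG : (G -> C) -> Prop)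
    (star : ser R G -> ser R G -> ser R G) : Prop :=
  is_formal_deformation AG star /\
  forall g f1 f2, in_ser AG f1 -> in_ser AG f2 ->
    ser_rtrans g (star f1 f2) = star (ser_rtrans g f1) (ser_rtrans g f2).

Variable X : Type.

Definition is_left_action (tau : G -> X -> X) : Prop :=
  (forall x, tau 1%g x = x) /\ (forall g h x, tau g (tau h x) = tau (g * h)%g x).

Definition alpha (tau : G -> X -> X) (x : X) (f : ser R X) : ser R G :=
  fun n g => f n (tau g x).

Definition AX (AG : (G -> C) -> Prop) (tau : G -> X -> X) : (X -> C) -> Prop :=
  fun u => forall x, AG (fun g => u (tau g x)).

Definition starX (star : ser R G -> ser R G -> ser R G) (tau : G -> X -> X)
    (f1 f2 : ser R X) : ser R X :=
  fun n x => star (alpha tau x f1) (alpha tau x f2) n 1%g.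

End Group.

(* Main.v *)
Require Import Defs.
From HB Require Import structures.
From mathcomp Require Import all_boot all_order all_algebra.
From mathcomp Require Import reals complex.
From Stdlib Require Import FunctionalExtensionality.
Import GRing.Theory Num.Theory.
Local Open Scope ring_scope.

Lemma alpha_tau (R : realType) (G : groupType) (X : Type) (tau : G -> X -> X)
  (Htau : is_left_action tau) g x (f : ser R X) :
  alpha tau (tau g x) f = ser_rtrans g (alpha tau x f).
Proof.
case: Htau => _ H2.
apply: functional_extensionality => n; apply: functional_extensionality => h.
by rewrite /alpha /ser_rtrans /rtrans H2.
Qed.

Lemma key (R : realType) (G : groupType) (X : Type)
    (AG : (G -> R[i]) -> Prop) (starG : ser R G -> ser R G -> ser R G)
    (tau : G -> X -> X) :
  is_right_universal_deformation AG starG ->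
  is_left_action tau ->
  forall x f1 f2, in_ser (AX AG tau) f1 -> in_ser (AX AG tau) f2 ->
         alpha tau x (starX starG tau f1 f2)
         = starG (alpha tau x f1) (alpha tau x f2).
Proof.
move=> [Hdef Hinv] Htau x f1 f2 H1 H2.
apply: functional_extensionality => n; apply: functional_extensionality => g.
rewrite /alpha /starX.
rewrite -/(alpha tau (tau g x) f1) -/(alpha tau (tau g x) f2) !alpha_tau //.
rewrite -Hinv; last by move=> k; apply: H2.
  by rewrite /ser_rtrans /rtrans mul1g.
by move=> k; apply: H1.
Qed.

Lemma ser_one_in (R : realType) (G : groupType) (AG : (G -> R[i]) -> Prop) :
  admissible_algebra AG -> in_ser AG (@ser_one R G).
Proof.
case=> H1 [_ Hs] _ _ _ n; rewrite /ser_one.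
case: (n == 0)%N; first exact: H1.
have := Hs 0 _ H1.
by have -> : (fun g : G => (0 : R[i]) * 1) = (fun _ => 0)
  by apply: functional_extensionality => g; rewrite mul0r.
Qed.

Lemma scale_one (R : realType) (T : Type) (c : nat -> R[i]) :
  ser_scale c (@ser_one R T) = fun n _ => c n.
Proof.
apply: functional_extensionality => n; apply: functional_extensionality => t.
rewrite /ser_scale /ser_one big_ord_recr /= subnn eqxx mulr1.
rewrite big1 ?add0r // => i _.
have : (n - i)%N != 0%N by rewrite subn_eq0 -ltnNge ltn_ord.
by move/negbTE => ->; rewrite mulr0.
Qed.

Lemma part2 (R : realType) (G : groupType) (X : Type)
    (AG : (G -> R[i]) -> Prop) (starG : ser R G -> ser R G -> ser R G)
    (tau : G -> X -> X) :
  admissible_algebra AG ->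
  is_right_universal_deformation AG starG ->
  is_left_action tau ->
  (forall x0 f1, in_ser (AX AG tau) f1 ->
     (forall n g g', f1 n (tau g x0) = f1 n (tau g' x0)) ->
     forall f2 g, in_ser (AX AG tau) f2 ->
       (fun n => starX starG tau f1 f2 n (tau g x0))
         = (fun n => ser_mul f1 f2 n (tau g x0))
       /\ (fun n => starX starG tau f2 f1 n (tau g x0))
         = (fun n => ser_mul f1 f2 n (tau g x0))).
Proof.
move=> Had [[Hcl [_ [_ [Hsl Hsr]]] _ _ Hun] Hinv] Htau x0 f1 Hf1 Hc f2 g Hf2.
case: (Htau) => Ht1 Ht2.
set c := fun n => f1 n (tau g x0).
have Ea : alpha tau (tau g x0) f1 = ser_scale c (@ser_one R G).
  rewrite scale_one; apply: functional_extensionality => n;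
  apply: functional_extensionality => h.
  by rewrite /alpha Ht2 /c (Hc n (h * g)%g g).
have Hone := @ser_one_in R G AG Had.
have Ha2 : in_ser AG (alpha tau (tau g x0) f2) by move=> k; apply: Hf2.
have Hfin : forall n, ser_scale c (alpha tau (tau g x0) f2) n 1%g
   = ser_mul f1 f2 n (tau g x0).
  move=> n; rewrite /ser_scale /ser_mul /alpha Ht1.
  by apply: eq_bigr => i _; rewrite /c.
split; apply: functional_extensionality => n; rewrite /starX Ea.
  by rewrite Hsl // (proj1 (Hun _ Ha2)) Hfin.
by rewrite Hsr // (proj2 (Hun _ Ha2)) Hfin.
Qed.

Theorem proposition7p1 (R : realType) (G : groupType) (X : Type)
    (AG : (G -> R[i]) -> Prop) (starG : ser R G -> ser R G -> ser R G)
    (tau : G -> X -> X) :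
  admissible_algebra AG ->
  is_right_universal_deformation AG starG ->
  is_left_action tau ->
  (* (1) *)
  (is_formal_deformation (AX AG tau) (starX starG tau)
   /\ (is_hermitian AG starG -> is_hermitian (AX AG tau) (starX starG tau))
   /\ (forall x f1 f2, in_ser (AX AG tau) f1 -> in_ser (AX AG tau) f2 ->
         alpha tau x (starX starG tau f1 f2)
         = starG (alpha tau x f1) (alpha tau x f2)))
  /\
  (* (2) *)
  (forall x0 f1, in_ser (AX AG tau) f1 ->
     (forall n g g', f1 n (tau g x0) = f1 n (tau g' x0)) ->
     forall f2 g, in_ser (AX AG tau) f2 ->
       (fun n => starX starG tau f1 f2 n (tau g x0))
         = (fun n => ser_mul f1 f2 n (tau g x0))
       /\ (fun n => starX starG tau f2 f1 n (tau g x0))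
         = (fun n => ser_mul f1 f2 n (tau g x0)))
  /\
  (forall f1, in_ser (AX AG tau) f1 ->
     (forall n g x, f1 n (tau g x) = f1 n x) ->
     forall f2, in_ser (AX AG tau) f2 ->
       starX starG tau f1 f2 = ser_mul f1 f2
       /\ starX starG tau f2 f1 = ser_mul f1 f2).
Proof.
move=> Had Hrud Htau.
have Hkey := @key R G X AG starG tau Hrud Htau.
have Hp2 := @part2 R G X AG starG tau Had Hrud Htau.
case: (Htau) => Ht1 Ht2.
case: (Hrud) => [[Hcl [Hal [Har [Hsl Hsr]]] Has H0 Hun] Hinv].
have inA : forall x f, in_ser (AX AG tau) f -> in_ser AG (alpha tau x f).
  by move=> x f Hf k; apply: Hf.
split; [split; [|split] | split].
- split.
  + move=> f1 f2 H1 H2 n x.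
    change (AG (alpha tau x (starX starG tau f1 f2) n)); rewrite Hkey //.
    by apply: Hcl; apply: inA.
  + split; [|split; [|split]].
    * move=> f1 f1' f2 H1 H1' H2.
      apply: functional_extensionality => n; apply: functional_extensionality => x.
      by rewrite /starX /= -/(ser_add _ _) Hal //; apply: inA.
    * move=> f1 f2 f2' H1 H2 H2'.
      apply: functional_extensionality => n; apply: functional_extensionality => x.
      by rewrite /starX /= Har //; apply: inA.
    * move=> a f1 f2 H1 H2.
      apply: functional_extensionality => n; apply: functional_extensionality => x.
      rewrite /starX.
      have -> : alpha tau x (ser_scale a f1) = ser_scale a (alpha tau x f1) by [].
      by rewrite Hsl //; apply: inA.
    * move=> a f1 f2 H1 H2.
      apply: functional_extensionality => n; apply: functional_extensionality => x.
      rewrite /starX.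
      have -> : alpha tau x (ser_scale a f2) = ser_scale a (alpha tau x f2) by [].
      by rewrite Hsr //; apply: inA.
  + move=> f1 f2 f3 H1 H2 H3.
    have H12 : in_ser (AX AG tau) (starX starG tau f1 f2).
      move=> n x; change (AG (alpha tau x (starX starG tau f1 f2) n)); rewrite Hkey //.
      by apply: Hcl; apply: inA.
    have H23 : in_ser (AX AG tau) (starX starG tau f2 f3).
      move=> n x; change (AG (alpha tau x (starX starG tau f2 f3) n)); rewrite Hkey //.
      by apply: Hcl; apply: inA.
    apply: functional_extensionality => n; apply: functional_extensionality => x.
    rewrite /starX -/(starX starG tau f1 f2) -/(starX starG tau f2 f3).
    by rewrite !Hkey // Has //; apply: inA.
  + move=> f1 f2 H1 H2; apply: functional_extensionality => x.
    by rewrite /starX H0 ?/alpha ?Ht1 //; apply: inA.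
  + move=> f Hf; split; apply: functional_extensionality => n;
      apply: functional_extensionality => x; rewrite /starX.
    * have -> : alpha tau x (@ser_one R X) = @ser_one R G by [].
      by rewrite (proj1 (Hun _ (inA x f Hf))) /alpha Ht1.
    * have -> : alpha tau x (@ser_one R X) = @ser_one R G by [].
      by rewrite (proj2 (Hun _ (inA x f Hf))) /alpha Ht1.
- move=> Hh f1 f2 H1 H2.
  apply: functional_extensionality => n; apply: functional_extensionality => x.
  rewrite /ser_conj /starX.
  have := congr1 (fun F => F n 1%g) (Hh _ _ (inA x f1 H1) (inA x f2 H2)).
  by rewrite /ser_conj /= => ->.
- exact: Hkey.
- exact: Hp2.
- move=> f1 Hf1 Hc f2 Hf2.
  have Hc' : forall x n g g', f1 n (tau g x) = f1 n (tau g' x)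
    by move=> x n g g'; rewrite !Hc.
  split; apply: functional_extensionality => n; apply: functional_extensionality => x;
  have [E1 E2] := Hp2 x f1 Hf1 (Hc' x) f2 1%g Hf2.
  + by have := congr1 (fun F => F n) E1; rewrite /= Ht1.
  + by have := congr1 (fun F => F n) E2; rewrite /= Ht1.
Qed.
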